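(* Let $\mathbb F$ have characteristic $0$, view $\mathbb F^k$ as an $\mathbb F$-algebra with coordinatewise multiplication, let $\mathbf a_1,\dots,\mathbf a_n\in\mathbb F^k$, $d\ge0$, and $D(\mathbf x)=(\mathbf 1+\mathbf a_1x_1+\dots+\mathbf a_nx_n)^d\in\mathbb F^k[\mathbf x]$, where $\mathbf 1$ is the all-ones vector. Then $D$ has a cone-closed basis.
   Context: For $D\in\mathbb F^k[\mathbf x]$, $\mathrm{lrsp}(D)$ is the span of its coefficient vectors. A set of monomials is cone-closed if it contains every submonomial ($\mathbf x^{\mathbf e'}$ with $\mathbf e'\le\mathbf e$ coordinatewise) of each element; $D$ has a cone-closed basis if there is a cone-closed set of monomials whose coefficient vectors form a basis of $\mathrm{lrsp}(D)$. *)

(* Defs.v *)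
From HB Require Import structures.
From mathcomp Require Import all_boot all_order all_algebra.
Set Implicit Arguments. Unset Strict Implicit. Unset Printing Implicit Defensive.
Import GRing.Theory.
Local Open Scope ring_scope.

(* Vectors of F^k are row vectors 'rV[F]_k; multiplication in the F-algebra
   F^k is coordinatewise. Monomials x^e in n variables are exponent vectors
   e : {ffun 'I_n -> nat}. *)

(* Linear form 1 + a_1 x_1 + ... + a_n x_n, written with an extra variable
   x_0 := 1: index ord0 has coefficient the all-ones vector, lift ord0 i has a_i. *)
Definition lin_coef (F : fieldType) (k n : nat) (a : 'I_n -> 'rV[F]_k)
    (j : 'I_n.+1) : 'rV[F]_k :=
  match unlift ord0 j with None => const_mx 1 | Some i => a i end.

(* A term of the distributive expansion of the d-fold product: a choice f of a
   summand of the linear form for each of the d factors. Its monomial: *)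
Definition mono_of (n d : nat) (f : {ffun 'I_d -> 'I_n.+1}) : {ffun 'I_n -> nat} :=
  [ffun i => #|[set t | f t == lift ord0 i]|].

(* Coefficient of x^e in D(x) = (1 + a_1 x_1 + ... + a_n x_n)^d in F^k[x]:
   the sum of the (coordinatewise) products over all expansion terms with
   monomial x^e. *)
Definition Dcoef (F : fieldType) (k n : nat) (a : 'I_n -> 'rV[F]_k) (d : nat)
    (e : {ffun 'I_n -> nat}) : 'rV[F]_k :=
  \sum_(f : {ffun 'I_d -> 'I_n.+1} | mono_of f == e)
     \row_(c < k) \prod_(t < d) lin_coef a (f t) 0 c.

(* lrsp(D): span of all coefficient vectors of D. Every monomial with a
   possibly nonzero coefficient is mono_of f for some f, so it suffices to
   span over those. *)
Definition lrspD (F : fieldType) (k n : nat) (a : 'I_n -> 'rV[F]_k) (d : nat)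
    : {vspace 'rV[F]_k} :=
  <<[seq Dcoef a d (mono_of f) | f : {ffun 'I_d -> 'I_n.+1}]>>%VS.

Definition submono (n : nat) (e' e : {ffun 'I_n -> nat}) : Prop :=
  forall i, (e' i <= e i)%N.

Definition cone_closed (n : nat) (S : seq {ffun 'I_n -> nat}) : Prop :=
  forall e e', e \in S -> submono e' e -> e' \in S.

Definition has_cone_closed_basis (F : fieldType) (k n : nat)
    (a : 'I_n -> 'rV[F]_k) (d : nat) : Prop :=
  exists S : seq {ffun 'I_n -> nat},
    cone_closed S /\ basis_of (lrspD a d) [seq Dcoef a d e | e <- S].

(* Main.v *)
Require Import Defs.
From HB Require Import structures.
From mathcomp Require Import all_boot all_order all_algebra.
Set Implicit Arguments. Unset Strict Implicit. Unset Printing Implicit Defensive.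

Section Ord.
Variable n : nat.
Notation mon := {ffun 'I_n -> nat}.
Definition degm (e : mon) := (\sum_i e i)%N.
Definition lexlt (e g : mon) :=
  [exists i : 'I_n, [forall j : 'I_n, (j < i)%N ==> (e j == g j)] && (e i < g i)%N].
Definition ltm (e g : mon) :=
  (degm e < degm g)%N || ((degm e == degm g) && lexlt e g).
Definition addm (e g : mon) : mon := [ffun i => e i + g i]%N.

Lemma lexlt_irr : irreflexive lexlt.
Proof. by move=> e; apply/existsP => -[i /andP [_]]; rewrite ltnn. Qed.

Lemma lexlt_trans : transitive lexlt.
Proof.
move=> g e h /existsP [i /andP [/forallP H1 l1]] /existsP [j /andP [/forallP H2 l2]].
apply/existsP; case: (ltngtP i j) => [ij|ji|/val_inj ij].
- exists i; apply/andP; split; last by rewrite -(eqP (implyP (H2 i) ij)).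
  apply/forallP => t; apply/implyP => ti.
  by rewrite (eqP (implyP (H1 t) ti)) (eqP (implyP (H2 t) (ltn_trans ti ij))).
- exists j; apply/andP; split; last by rewrite (eqP (implyP (H1 j) ji)).
  apply/forallP => t; apply/implyP => tj.
  by rewrite (eqP (implyP (H1 t) (ltn_trans tj ji))) (eqP (implyP (H2 t) tj)).
- subst j; exists i; apply/andP; split; last exact: ltn_trans l1 l2.
  apply/forallP => t; apply/implyP => ti.
  by rewrite (eqP (implyP (H1 t) ti)) (eqP (implyP (H2 t) ti)).
Qed.

Lemma lexlt_total e g : e != g -> lexlt e g || lexlt g e.
Proof.
move=> neq.
have [i ie] : exists i, e i != g i.
  apply/existsP; apply: contraR neq => /existsPn H; apply/eqP/ffunP => i.
  by apply/eqP; move: (H i); rewrite negbK.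
case: (arg_minnP (P := fun i => e i != g i) (fun i : 'I_n => nat_of_ord i) ie) => m em mmin.
have pre : [forall j : 'I_n, (j < m)%N ==> (e j == g j)].
  apply/forallP => j; apply/implyP => jm; apply: contraTT jm => H.
  by rewrite -leqNgt; apply: mmin.
case: (ltngtP (e m) (g m)) => [l|l|eq]; last by rewrite eq eqxx in em.
  by apply/orP; left; apply/existsP; exists m; rewrite pre.
apply/orP; right; apply/existsP; exists m; rewrite l andbT.
apply/forallP => j; apply/implyP => jm; by rewrite eq_sym (eqP (implyP (forallP pre j) jm)).
Qed.

Lemma ltm_irr : irreflexive ltm.
Proof. by move=> e; rewrite /ltm ltnn lexlt_irr andbF. Qed.

Lemma ltm_trans : transitive ltm.
Proof.
move=> g e h; rewrite /ltm => /orP [l1|/andP [/eqP d1 l1]] /orP [l2|/andP [/eqP d2 l2]].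
- by rewrite (ltn_trans l1 l2).
- by rewrite -d2 l1.
- by rewrite d1 l2.
- by rewrite d1 d2 eqxx (lexlt_trans l1 l2) orbT.
Qed.

Lemma ltm_total e g : e != g -> ltm e g || ltm g e.
Proof.
move=> /lexlt_total; rewrite /ltm eq_sym; case: (ltngtP (degm e) (degm g)) => //=.
Qed.

Lemma degm_add e g : degm (addm e g) = (degm e + degm g)%N.
Proof. by rewrite /degm -big_split; apply: eq_bigr => i _; rewrite ffunE. Qed.

Lemma lexlt_add e g h : lexlt e g -> lexlt (addm e h) (addm g h).
Proof.
move=> /existsP [i /andP [/forallP H l]]; apply/existsP; exists i.
rewrite !ffunE ltn_add2r l andbT; apply/forallP => j; apply/implyP => ji.
by rewrite !ffunE (eqP (implyP (H j) ji)).
Qed.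

Lemma ltm_add e g h : ltm e g -> ltm (addm e h) (addm g h).
Proof.
rewrite /ltm !degm_add ltn_add2r eqn_add2r => /orP [->//|/andP [-> l]].
by rewrite lexlt_add ?orbT.
Qed.

Lemma ltm_deg e g : ltm e g -> (degm e <= degm g)%N.
Proof. by rewrite /ltm => /orP [/ltnW //|/andP [/eqP -> _]]. Qed.
End Ord.
Import GRing.Theory.
Local Open Scope ring_scope.

Lemma count_lt_strict (T : eqType) (a1 a2 : pred T) (s : seq T) x :
  subpred a1 a2 -> x \in s -> a2 x -> ~~ a1 x -> (count a1 s < count a2 s)%N.
Proof.
move=> sub; elim: s => // y s IH; rewrite inE => /orP [/eqP <-|xs] a2x na1x /=.
  rewrite a2x (negbTE na1x) add0n add1n ltnS; exact: sub_count.
rewrite -addnS; apply: leq_add; last exact: IH.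
by case: (a1 y) (sub y) => // ->.
Qed.

Section Greedy.
Variables (K : fieldType) (vT : vectType K) (T : eqType) (q : T -> vT) (lt : rel T).
Hypothesis lt_irr : irreflexive lt.
Hypothesis lt_trans : transitive lt.
Hypothesis lt_total : forall x y, x != y -> lt x y || lt y x.
Variable M : seq T.
Hypothesis M_uniq : uniq M.

Definition below e := [seq q g | g <- M & lt g e].
Definition S0 := [seq e <- M | q e \notin <<below e>>%VS].
Definition ge x y := (x == y) || lt y x.
Definition Sg := sort ge S0.

Lemma ge_total : total ge.
Proof. move=> x y; rewrite /ge; case: (eqVneq x y) => [->|/lt_total]; first by rewrite ?eqxx.
by case/orP => ->; rewrite ?orbT. Qed.

Lemma ge_trans : transitive ge.
Proof. move=> y x z; rewrite /ge => /orP [/eqP ->//|l1] /orP [/eqP <-|l2]; first by rewrite l1 orbT.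
by rewrite (lt_trans l2 l1) orbT. Qed.

Lemma free_sorted s : sorted ge s -> uniq s -> {subset s <= S0} -> free (map q s).
Proof.
elim: s => [|x s IH] /=; first by rewrite /free /= span_nil dimv0.
move=> srt /andP [xs us] sub; rewrite free_cons IH ?(path_sorted srt) //; last first.
  by move=> y ys; apply: sub; rewrite inE ys orbT.
have := sub x (mem_head _ _); rewrite /S0 mem_filter => /andP [nin xM].
rewrite andbT; apply: contra nin => H; apply: subvP H.
apply/span_subvP => _ /mapP [y ys ->]; apply: memv_span; apply: map_f.
have := order_path_min ge_trans srt => /allP /(_ y ys); rewrite /ge.
have yS : y \in S0 by apply: sub; rewrite inE ys orbT.
move: yS; rewrite /S0 mem_filter => /andP [_ yM].
case/orP => [/eqP xy|yx]; first by rewrite xy ys in xs.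
by rewrite mem_filter yM andbT.
Qed.

Lemma Sg_free : free (map q Sg).
Proof.
rewrite /Sg; apply: free_sorted; first exact: (sort_sorted ge_total).
  by rewrite sort_uniq filter_uniq.
by move=> x; rewrite mem_sort.
Qed.

Lemma below_sub m : forall e, (count (lt^~ e) M <= m)%N -> (<<below e>> <= <<map q Sg>>)%VS.
Proof.
elim: m => [|m IH] e cnt; apply/span_subvP => v /mapP [g]; rewrite mem_filter => /andP [lge gM] ->.
  have : (0 < count (lt^~ e) M)%N by rewrite -has_count; apply/hasP; exists g.
  by rewrite lt0n -leqn0 cnt.
case gS: (g \in S0).
  by apply: memv_span; apply: map_f; rewrite mem_sort.
move: gS; rewrite /S0 mem_filter gM andbT => /negbFE H; apply: subvP H.
apply: IH; rewrite -ltnS; apply: leq_trans cnt.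
apply: (count_lt_strict (x := g)) => //; last by rewrite lt_irr.
by move=> y /= yg; exact: lt_trans yg lge.
Qed.

Lemma Sg_span : <<map q Sg>>%VS = <<map q M>>%VS.
Proof.
apply: subv_anti; apply/andP; split.
  apply: sub_span => _ /mapP [x xS ->]; apply: map_f.
  by move: xS; rewrite mem_sort mem_filter => /andP [].
apply/span_subvP => _ /mapP [x xM ->].
case xS: (x \in S0); first by apply: memv_span; apply: map_f; rewrite mem_sort.
move: xS; rewrite /S0 mem_filter xM andbT => /negbFE H; apply: subvP H.
exact: (@below_sub (count (lt^~ x) M)).
Qed.

End Greedy.

Section Conc.
Variables (F : fieldType) (k n : nat) (a : 'I_n -> 'rV[F]_k) (d : nat).

Definition powv (e : {ffun 'I_n -> nat}) : 'rV[F]_k := \row_c \prod_i a i 0 c ^+ e i.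

Lemma row_prod (f : {ffun 'I_d -> 'I_n.+1}) :
  \row_c \prod_(t < d) lin_coef a (f t) 0 c = powv (mono_of f).
Proof.
apply/rowP => c; rewrite !mxE.
rewrite (partition_big f xpredT) //=.
rewrite (eq_bigr (fun j => lin_coef a j 0 c ^+ #|[pred t | f t == j]|)); last first.
  by move=> j _; rewrite -prodr_const; apply: eq_big => // t /eqP ->.
rewrite big_ord_recl /= {1}/lin_coef unlift_none mxE expr1n mul1r.
apply: eq_bigr => i _; rewrite /lin_coef liftK ffunE; congr (_ ^+ _).
by apply: eq_card => t; rewrite !inE.
Qed.

Lemma Dcoef_eq e : Dcoef a d e = #|[pred f : {ffun 'I_d -> 'I_n.+1} | mono_of f == e]|%:R *: powv e.
Proof.
rewrite /Dcoef scaler_nat -sumr_const; apply: eq_bigr => f /eqP <-.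
exact: row_prod.
Qed.

Lemma count_ord0 (f : {ffun 'I_d -> 'I_n.+1}) :
  (#|[pred t | f t == ord0]| + degm (mono_of f))%N = d.
Proof.
have H : (\sum_(t < d) 1)%N = d by rewrite sum1_card card_ord.
apply: (etrans _ H); rewrite (partition_big f xpredT) //= big_ord_recl /=.
congr (_ + _)%N; first by rewrite sum1_card.
by apply: eq_bigr => i _; rewrite ffunE sum1_card cardsE.
Qed.

Lemma mono_exists m : forall e : {ffun 'I_n -> nat}, degm e = m -> (m <= d)%N ->
  exists f : {ffun 'I_d -> 'I_n.+1}, mono_of f = e.
Proof.
elim: m => [|m IH] e de md.
  exists [ffun=> ord0]; apply/ffunP => i; rewrite !ffunE.
  have : e i = 0%N.
    by apply/eqP; rewrite -leqn0 -de /degm (bigD1 i) //= leq_addr.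
  move=> ->; apply/eqP; rewrite cards_eq0; apply/eqP/setP => t.
  by rewrite !inE ffunE.
have [i ei] : exists i, (0 < e i)%N.
  apply/existsP; apply: contraT => /existsPn H.
  suff : degm e = 0%N by rewrite de.
  by apply/eqP; rewrite /degm sum_nat_eq0; apply/forallP => i; apply/implyP => _; rewrite -leqn0 leqNgt H.
pose e' : {ffun 'I_n -> nat} := [ffun j => if j == i then (e j).-1 else e j].
have de' : degm e' = m.
  apply/eq_add_S; rewrite -de /degm (bigD1 i) //= [in RHS](bigD1 i) //= ffunE eqxx.
  rewrite -addSn prednK //; congr (_ + _)%N; apply: eq_bigr => j ji.
  by rewrite ffunE (negbTE ji).
have [f fe] := IH e' de' (ltnW md).
have : (0 < #|[pred t | f t == ord0]|)%N.
  have := count_ord0 f; rewrite fe de' => H; rewrite -(ltn_add2r m) H add0n //.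
case/card_gt0P => t0; rewrite inE => /eqP ft0.
exists [ffun t => if t == t0 then lift ord0 i else f t].
apply/ffunP => j; rewrite !ffunE.
have -> : [set t | [ffun t => if t == t0 then lift ord0 i else f t] t == lift ord0 j]
     = if j == i then t0 |: [set t | f t == lift ord0 j] else [set t | f t == lift ord0 j].
  apply/setP => t; rewrite !inE ffunE; case: (eqVneq j i) => [->|ji]; rewrite ?inE;
    case: (eqVneq t t0) => [->|//]; rewrite ?eqxx ?ft0 //.
  by rewrite eq_sym (inj_eq (@lift_inj _ ord0)) (negbTE ji).
move/ffunP: fe => /(_ j); rewrite !ffunE.
move=> H; case: (eqVneq j i) H => [->|_] H.
  rewrite cardsU1 inE ft0.
  rewrite neq_lift add1n.
  have -> : #|[set t | f t == lift ord0 i]| = (e i).-1 by exact: H.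
  by rewrite prednK.
exact: H.
Qed.

Lemma degm_mono (f : {ffun 'I_d -> 'I_n.+1}) : (degm (mono_of f) <= d)%N.
Proof. by rewrite -{2}(count_ord0 f) leq_addl. Qed.

End Conc.

Lemma span_mul (F : fieldType) k (X : seq 'rV[F]_k) (w : 'rV[F]_k) (U : {vspace 'rV[F]_k}) v :
  (forall x, x \in X -> x *m diag_mx w \in U) -> v \in <<X>>%VS -> v *m diag_mx w \in U.
Proof.
move=> H vX; have := @coord_span _ _ _ (in_tuple X) v vX => ->.
rewrite mulmx_suml; apply: memv_suml => i _; rewrite -scalemxAl; apply: memvZ.
by apply: H; apply: mem_nth; exact: ltn_ord.
Qed.

Lemma powv_add (F : fieldType) k n (a : 'I_n -> 'rV[F]_k) g h :
  powv a (addm g h) = powv a g *m diag_mx (powv a h).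
Proof.
apply/rowP => c; rewrite mul_mx_diag !mxE -big_split; apply: eq_bigr => i _.
by rewrite ffunE exprD.
Qed.

Theorem lemmaD1 (F : fieldType) (hF : [pchar F]%R =i pred0) (k n : nat)
    (a : 'I_n -> 'rV[F]_k) (d : nat) :
  has_cone_closed_basis a d.
Proof.
pose M := undup [seq mono_of f | f <- enum {ffun 'I_d -> 'I_n.+1}].
have memM : forall e, (e \in M) = (degm e <= d)%N.
  move=> e; rewrite mem_undup; apply/mapP/idP => [[f _ ->]|de].
    exact: degm_mono.
  have [f fe] := @mono_exists n d _ e (erefl (degm e)) de.
  by exists f; rewrite ?mem_enum.
have Muniq : uniq M by exact: undup_uniq.
pose c e := (#|[pred f : {ffun 'I_d -> 'I_n.+1} | mono_of f == e]|)%:R : F.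
have cnz : forall e, e \in M -> c e != 0.
  move=> e; rewrite memM => de; rewrite /c (pcharf0P _).1 // -lt0n.
  have [f fe] := @mono_exists n d _ e (erefl (degm e)) de.
  by apply/card_gt0P; exists f; rewrite inE fe.
have qE : forall e, Dcoef a d e = c e *: powv a e by move=> e; exact: Dcoef_eq.
have pE : forall e, e \in M -> powv a e = (c e)^-1 *: Dcoef a d e.
  by move=> e eM; rewrite qE scalerA mulVf ?scale1r // cnz.
pose q := Dcoef a d.
exists (Sg q (@ltm n) M); split; last first.
  rewrite /basis_of (Sg_free q (@ltm_trans n) (@ltm_total n) Muniq).
  rewrite andbT (Sg_span q (@ltm_irr n) (@ltm_trans n)).
  rewrite /lrspD; apply/eqP/eq_span => v; apply/mapP/mapP => [[e]|[f _ ->]].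
    by rewrite mem_undup => /mapP [f _ ->] ->; exists f; rewrite ?mem_enum.
  by exists (mono_of f) => //; rewrite mem_undup; apply: map_f; rewrite mem_enum.
move=> e e'; rewrite mem_sort !mem_filter => /andP [nin eM] sub.
have e'M : e' \in M.
  rewrite memM; apply: leq_trans _ (_ : degm e <= d)%N; last by rewrite -memM.
  by apply: leq_sum => i _; exact: sub.
rewrite /Sg mem_sort /S0 mem_filter e'M andbT; apply: contra nin => H.
pose h : {ffun 'I_n -> nat} := [ffun i => e i - e' i]%N.
have eE : addm e' h = e by apply/ffunP => i; rewrite !ffunE subnKC // sub.
rewrite /q qE; apply: memvZ; rewrite -eE powv_add.
apply: (@span_mul _ _ (below q (@ltm n) M e')); last first.
  by rewrite pE //; apply: memvZ.
move=> x /mapP [g]; rewrite mem_filter => /andP [lg gM] ->.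
rewrite /q qE -scalemxAl -powv_add; apply: memvZ.
have gh : addm g h \in M.
  rewrite memM degm_add; apply: leq_trans _ (_ : degm e <= d)%N; last by rewrite -memM.
  by rewrite -eE degm_add leq_add2r ltm_deg.
rewrite pE //; apply: memvZ; apply: memv_span; apply: map_f.
by rewrite mem_filter gh andbT ltm_add.
Qed.
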